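(* Let $n\ge 1$ and $d\in\mathbb{N}$ be integers, and define $N$ by $N(n,d)=N+1$. Let $\{r_k\}_{k\in\mathbb{N}}$ be a sequence of positive real numbers and, for each $k\in\mathbb{N}$, let $A_k=\{\mathbf{a}^k_0,\ldots,\mathbf{a}^k_N\}\subset\mathbb{R}^n$ be a set of $N+1$ distinct points. Suppose that: (1) $A_k$ is contained in the closed ball of radius $r_k$ centred at $\mathbf{a}^k_0$; (2) $\lim_{k\to\infty}\mathbf{a}^k_0=\boldsymbol{\xi}$ for some $\boldsymbol{\xi}\in\mathbb{R}^n$; (3) $\lim_{k\to\infty}r_k=0$; (4) there exists $c>0$ independent of $k$ such that $|\operatorname{Det} V(A_k)|\ge c\cdot r_k^{\,n\cdot N(n+1,d-1)}$ for all $k\in\mathbb{N}$. If $X\subset\mathbb{R}^n$ is a closed subset with $\bigcup_k A_k\subset X$, then $\tau^d_{N,\boldsymbol{\xi}}(X)=\mathcal{P}_d^*$.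
   Context: $N(n,d):=\binom{n+d}{d}$ (with $N(m,-1):=0$); it is the dimension of the space $\mathcal{P}_d$ of real polynomials in $n$ variables of degree $\le d$, and $\mathcal{P}_d^*$ is its dual. $I(n,d)$ is the set of multi-indices $\mathbf{j}=(j_1,\dots,j_n)\in\mathbb{Z}_{\ge0}^n$ with $|\mathbf{j}|=j_1+\dots+j_n\le d$, and $\mathbf{x}^{\mathbf{j}}=x_1^{j_1}\cdots x_n^{j_n}$. For a set $A=\{\mathbf{a}_0,\dots,\mathbf{a}_N\}$ of $N(n,d)$ points, with orderings of $A$ and of $I(n,d)=\{\mathbf{j}_0,\dots,\mathbf{j}_N\}$ fixed, the Vandermonde matrix is $V(A)=(\mathbf{a}_i^{\mathbf{j}_l})_{0\le i,l\le N}$; $|\operatorname{Det}V(A)|$ does not depend on the orderings. For $\mathbf{a}\in\mathbb{R}^n$ and $|\mathbf{p}|\le d$, $\delta^{(\mathbf{p})}_{\mathbf{a}}\in\mathcal{P}_d^*$ is $f\mapsto(-1)^{|\mathbf{p}|}\partial^{|\mathbf{p}|}f/\partial\mathbf{x}^{\mathbf{p}}(\mathbf{a})$, and $\delta_{\mathbf{a}}=\delta^{(\mathbf{0})}_{\mathbf{a}}$ (evaluation at $\mathbf{a}$). For $X\subset\mathbb{R}^n$, a bundle over $X$ is a subset $E\subset X\times\mathcal{P}_d^*$ whose fibres $E_{\mathbf{a}}=\{\xi:(\mathbf{a},\xi)\in E\}$ are linear subspaces. Higher order paratangent bundle $\tau^d_N(X)$ (Bierstone–Milman–Paw\l ucki):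 put $E_0=\{(\mathbf{a},\lambda\delta_{\mathbf{a}}):\mathbf{a}\in X,\lambda\in\mathbb{R}\}$. Given $E_k$, let $\Delta E_k$ be the set of $(\mathbf{a}_0,\dots,\mathbf{a}_N,\xi_0+\dots+\xi_N)\in X^{N+1}\times\mathcal{P}_d^*$ with $\mathbf{a}_i\in X$, $\xi_i\in E_{k,\mathbf{a}_i}$ and $|\mathbf{a}_i-\mathbf{a}_0|^{d-|\alpha|}\,|\xi_i((\mathbf{x}-\mathbf{a}_i)^\alpha)|\le1$ for all multi-indices $|\alpha|\le d$ and $0\le i\le N$. Let $E'_k$ be the set of $(\mathbf{a},\xi)\in X\times\mathcal{P}_d^*$ such that $(\mathbf{a},\dots,\mathbf{a},\xi)$ lies in the closure of $\Delta E_k$, and let $E_{k+1}$ be the bundle whose fibre at $\mathbf{a}$ is the linear span of $E'_{k,\mathbf{a}}$. The sequence $E_0\subset E_1\subset\cdots$ stabilizes, and $\tau^d_N(X):=E_{2\dim\mathcal{P}_d^*}$ is its stable value; $\tau^d_{N,\mathbf{a}}(X)$ denotes its fibre at $\mathbf{a}\in X$. *)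

(* Defs.v *)
From HB Require Import structures.
From mathcomp Require Import all_boot all_order all_algebra.
From mathcomp Require Import reals mpoly.

Set Implicit Arguments.
Unset Strict Implicit.
Unset Printing Implicit Defensive.

Import Order.TTheory GRing.Theory Num.Theory.
Local Open Scope ring_scope.

Section Paratangent.
Variable R : realType.

(* N(n,d) = binom(n+d, d), with N(m,-1) = 0 (the "-1" case is handled by
   Ndim_pred m d = N(m, d-1)). *)
Definition Ndim (m e : nat) : nat := 'C(m + e, e).
Definition Ndim_pred (m d : nat) : nat :=
  if d is d'.+1 then Ndim m d' else 0%N.

Definition point (n : nat) := 'I_n -> R.

Definition enorm n (v : point n) : R := Num.sqrt (\sum_(i < n) v i ^+ 2).
Definition pdist n (u v : point n) : R := enorm (fun i => u i - v i).

Definition mindex (n d : nat) := 'X_{1..n < d.+1}.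

Definition xmon n d (j : mindex n d) : {mpoly R[n]} := 'X_[val j].
Definition pow_pt n d (a : point n) (j : mindex n d) : R := (xmon j).@[a].

(* number of points N+1 = #I(n,d) = dim P_d *)
Definition Npts (n d : nat) : nat := #|{: mindex n d}|.

Lemma Npts_gt0 n d : (0 < Npts n d)%N.
Proof. by apply/card_gt0P; exists (@bm0 n d). Qed.

Definition idx0 n d : 'I_(Npts n d) := Ordinal (Npts_gt0 n d).

Definition vdm_matrix n d (A : 'I_(Npts n d) -> point n) : 'M[R]_(Npts n d) :=
  \matrix_(i, l) pow_pt (A i) (enum_val l).

(* P_d^* : a linear functional on P_d is identified with its values on the
   monomial basis {x^j : j in I(n,d)}; it acts on p in P_d by linearity. *)
Definition dual (n d : nat) := {ffun mindex n d -> R}.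
Definition dapp n d (xi : dual n d) (p : {mpoly R[n]}) : R :=
  \sum_(j : mindex n d) p@_(val j) * xi j.

Definition delta n d (a : point n) : dual n d := [ffun j => pow_pt a j].

Definition xminus_pow n d (a : point n) (al : mindex n d) : {mpoly R[n]} :=
  \prod_(l < n) ('X_l - (a l)%:MP) ^+ (val al l).

(* bundles over X: predicates E a xi meaning xi in E_a (a in X) *)
Definition bundle n d := point n -> dual n d -> Prop.

Definition E0 n d (X : point n -> Prop) : bundle n d :=
  fun a xi => X a /\ exists lam : R, xi = [ffun j => lam * delta d a j].

Definition DeltaE n d (X : point n -> Prop) (E : bundle n d)
    (b : 'I_(Npts n d) -> point n) (zeta : dual n d) : Prop :=
  exists xis : 'I_(Npts n d) -> dual n d,
    [/\ forall i, X (b i),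
        forall i, E (b i) (xis i),
        zeta = \sum_i xis i &
        forall (al : mindex n d) i,
          pdist (b i) (b (idx0 n d)) ^+ (d - mdeg (val al))
            * `|dapp (xis i) (xminus_pow (b i) al)| <= 1].

(* (a,...,a,xi) lies in the closure of Delta E (product topology on
   X^{N+1} x P_d^*, P_d^* with coordinates in the monomial basis) *)
Definition in_closure_diag n d (X : point n -> Prop) (E : bundle n d)
    (a : point n) (xi : dual n d) : Prop :=
  forall eps : R, 0 < eps ->
    exists b zeta, DeltaE X E b zeta /\
      (forall i, pdist (b i) a < eps) /\
      (forall j, `|zeta j - xi j| < eps).

Definition Eprime n d (X : point n -> Prop) (E : bundle n d) : bundle n d :=
  fun a xi => X a /\ in_closure_diag X E a xi.

Definition span_set n d (S : dual n d -> Prop) (xi : dual n d) : Prop :=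
  exists (k : nat) (s : 'I_k -> dual n d) (c : 'I_k -> R),
    (forall i, S (s i)) /\ xi = [ffun j => \sum_i c i * s i j].

Definition Enext n d (X : point n -> Prop) (E : bundle n d) : bundle n d :=
  fun a xi => X a /\ span_set (Eprime X E a) xi.

Fixpoint Eseq n d (X : point n -> Prop) (k : nat) : bundle n d :=
  if k is k'.+1 then @Enext n d X (Eseq X k') else @E0 n d X.

Definition paratangent n d (X : point n -> Prop) : bundle n d :=
  @Eseq n d X (2 * Npts n d).

Definition closed_set n (X : point n -> Prop) : Prop :=
  forall a : point n,
    (forall eps : R, 0 < eps -> exists b, X b /\ pdist b a < eps) -> X a.

End Paratangent.

(* Main.v *)
Require Import Defs.
From HB Require Import structures.
From mathcomp Require Import all_boot all_order all_algebra.
From mathcomp Require Import reals mpoly.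
From mathcomp Require Import fingroup perm.
From mathcomp Require Import zify ring lra.
Set Implicit Arguments. Unset Strict Implicit. Unset Printing Implicit Defensive.
Import Order.TTheory GRing.Theory Num.Theory.
Local Open Scope ring_scope.

Section P.
Variable R : realType.
Variable n : nat.

Lemma msizeM_le' (p q : {mpoly R[n]}) : (msize (p * q) <= (msize p + msize q) - 1)%N.
Proof.
have [->|nzp] := eqVneq p 0; first by rewrite mul0r msize0.
have [->|nzq] := eqVneq q 0; first by rewrite mulr0 msize0.
by rewrite msizeM // subn1.
Qed.

Lemma msizeD_le' (p q : {mpoly R[n]}) : (msize (p + q) <= maxn (msize p) (msize q))%N.
Proof. exact: mmeasureD_le. Qed.

Definition degle (e : nat) (p : {mpoly R[n]}) := (msize p <= e.+1)%N.

Lemma degleM a b p q : degle a p -> degle b q -> degle (a + b) (p * q).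
Proof.
rewrite /degle => ha hb; have := msizeM_le' p q; lia.
Qed.

Lemma degleD a p q : degle a p -> degle a q -> degle a (p + q).
Proof.
rewrite /degle => hp hq; have := msizeD_le' p q; lia.
Qed.

Lemma degleW a b p : (a <= b)%N -> degle a p -> degle b p.
Proof. by rewrite /degle => h1 h2; apply: leq_trans h2 _. Qed.

Lemma degleC c : degle 0 (c%:MP : {mpoly R[n]}).
Proof. rewrite /degle mmeasureC; by case: (c != 0). Qed.

Lemma degleX m : degle (mdeg m) ('X_[m] : {mpoly R[n]}).
Proof. by rewrite /degle msizeX. Qed.

Lemma degle_mcoeff e p m : degle e p -> (e < mdeg m)%N -> p@_m = 0.
Proof.
rewrite /degle => h1 h2; apply: memN_msupp_eq0; apply: msize_mdeg_ge.
by apply: leq_trans h1 _.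
Qed.

Definition top (a : 'X_{1..n}) (p : {mpoly R[n]}) :=
  (msize (p - 'X_[a]) <= mdeg a)%N.

Lemma topM a b p q : top a p -> top b q -> top (a + b) (p * q).
Proof.
rewrite /top => ha hb.
set p' := p - 'X_[a] in ha; set q' := q - 'X_[b] in hb.
have -> : p * q - 'X_[a + b] = 'X_[a] * q' + p' * 'X_[b] + p' * q'.
  by rewrite mpolyXD /p' /q'; ring.
rewrite mdegD.
have h1 := msizeM_le' 'X_[a] q'; have h2 := msizeM_le' p' 'X_[b].
have h3 := msizeM_le' p' q'.
have h4 := msizeD_le' ('X_[a] * q') (p' * 'X_[b]).
have h5 := msizeD_le' ('X_[a] * q' + p' * 'X_[b]) (p' * q').
rewrite !msizeX in h1 h2; clearbody p' q'.
apply: leq_trans h5 _; rewrite geq_max; apply/andP; split.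
  apply: leq_trans h4 _; rewrite geq_max; apply/andP; split.
    by apply: leq_trans h1 _; lia.
  by apply: leq_trans h2 _; lia.
by apply: leq_trans h3 _; lia.
Qed.

Lemma top_degle a p : top a p -> degle (mdeg a) p.
Proof.
rewrite /top /degle => h.
have -> : p = (p - 'X_[a]) + 'X_[a] by rewrite subrK.
have := msizeD_le' (p - 'X_[a]) 'X_[a]; rewrite msizeX; lia.
Qed.

Lemma top_coeff a p b : top a p -> (mdeg a <= mdeg b)%N -> p@_b = (a == b)%:R.
Proof.
rewrite /top => h hb.
have -> : p = (p - 'X_[a]) + 'X_[a] by rewrite subrK.
rewrite mcoeffD mcoeffX memN_msupp_eq0 ?add0r //.
apply: msize_mdeg_ge; lia.
Qed.

Lemma top_shift (c : R) (i : 'I_n) : top U_(i)%MM ('X_i - c%:MP).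
Proof.
rewrite /top mdeg1 -/('X_i) (_ : _ - _ = - c%:MP); last by rewrite /mpolyX; ring.
by rewrite -(rmorphN (@mpolyC n R)) mmeasureC; case: (_ != 0).
Qed.


Lemma top1 : top 0%MM (1 : {mpoly R[n]}).
Proof. by rewrite /top mpolyX0 subrr msize0. Qed.

Lemma topX a p k : top a p -> top (a *+ k)%MM (p ^+ k).
Proof.
move=> h; elim: k => [|k ih]; first by rewrite expr0 mulm0n; exact: top1.
by rewrite exprS mulmS; apply: topM.
Qed.

Definition shiftpoly (c : 'I_n -> R) (j : 'X_{1..n}) : {mpoly R[n]} :=
  \prod_(l < n) ('X_l - (c l)%:MP) ^+ (j l).

Lemma top_shiftpoly c j : top j (shiftpoly c j).
Proof.
rewrite {1}(multinomUE_id j) /shiftpoly.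
elim/big_rec2: _ => [|l m p _ h]; first exact: top1.
by apply: topM => //; apply: topX; apply: top_shift.
Qed.

Lemma meval_shiftpoly v c j :
  (shiftpoly c j).@[v] = \prod_(l < n) (v l - c l) ^+ (j l).
Proof.
rewrite /shiftpoly (big_morph _ (@mevalM _ _ v) (meval1 v)).
by apply: eq_bigr => l _; rewrite rmorphXn /= mevalB mevalXU mevalC.
Qed.

End P.

Section Q.
Variable R : realType.
Variables n d : nat.

Lemma dapp_scale (xi : dual R n d) (lam : R) p :
  dapp [ffun j => lam * xi j] p = lam * dapp xi p.
Proof.
rewrite /dapp mulr_sumr; apply: eq_bigr => j _; rewrite ffunE; ring.
Qed.

Lemma dapp_sumX (xi : dual R n d) (s : seq 'X_{1..n}) (c : 'X_{1..n} -> R) :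
  dapp xi (\sum_(m <- s) c m *: 'X_[m]) = \sum_(m <- s) c m * dapp xi 'X_[m].
Proof.
elim: s => [|m s ih]; rewrite ?big_nil ?big_cons.
  by rewrite /dapp big1 // => j _; rewrite mcoeff0 mul0r.
rewrite -ih /dapp mulr_sumr -big_split; apply: eq_bigr => j _ /=.
rewrite mcoeffD mcoeffZ; ring.
Qed.

Lemma dapp_deltaX (a : point R n) m : (mdeg m < d.+1)%N ->
  dapp (delta d a) 'X_[m] = ('X_[m] : {mpoly R[n]}).@[a].
Proof.
move=> hm; rewrite /dapp (bigD1 (BMultinom hm)) //= big1 ?addr0.
  by rewrite mcoeffX eqxx mul1r ffunE /pow_pt /xmon.
move=> j hj; rewrite mcoeffX; case: eqVneq => [e|]; last by rewrite mul0r.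
by move: hj; rewrite -(inj_eq val_inj) /= e eqxx.
Qed.

Lemma dapp_delta (a : point R n) p : degle d p -> dapp (delta d a) p = p.@[a].
Proof.
move=> hp; rewrite {1 2}(mpolyE p) dapp_sumX raddf_sum /=.
rewrite big_seq [RHS]big_seq; apply: eq_bigr => m hm.
rewrite mevalZ dapp_deltaX //; apply: leq_trans (msize_mdeg_lt hm) hp.
Qed.

Lemma dapp_delta_xminus (a : point R n) (al : mindex n d) :
  dapp (delta d a) (xminus_pow a al) = if mdeg (val al) == 0%N then 1 else 0.
Proof.
have hd : degle d (xminus_pow a al).
  apply: degleW (top_degle (top_shiftpoly a (val al))).
  by rewrite -ltnS; apply: bmdeg.
rewrite dapp_delta // [xminus_pow _ _]/(shiftpoly a (val al)) meval_shiftpoly.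
case: eqP => [/eqP|].
  rewrite mdeg_eq0 => /eqP ->; rewrite big1 // => l _; by rewrite mnm0E expr0.
move=> /eqP; rewrite mdegE => hs.
case: (pickP (fun l => 0 < (val al) l)%N) => [l hl|h0]; last first.
  by case/eqP: hs; rewrite big1 // => l _; move: (h0 l) => /= /negbT; rewrite lt0n negbK => /eqP.
by rewrite (bigD1 l) //= subrr expr0n gtn_eqF // mul0r.
Qed.

End Q.


Lemma sum_le_eq (I : finType) (f g : I -> nat) :
  (forall i, f i <= g i)%N -> (\sum_i f i = \sum_i g i)%N -> forall i, f i = g i.
Proof.
move=> hle heq i; apply/eqP; rewrite eqn_leq hle /=; rewrite leqNgt; apply/negP => hlt.
move: heq; rewrite (bigD1 i) //= [X in _ = X](bigD1 i) //= => heq.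
have : (\sum_(j | j != i) f j <= \sum_(j | j != i) g j)%N by apply: leq_sum.
lia.
Qed.

Section T.
Variable R : realType.
Variables n d : nat.
Local Notation N1 := (Npts n d).

Definition Tmx (c : point R n) : 'M[R]_N1 :=
  \matrix_(b, l) (shiftpoly (fun k => - c k) (val (enum_val l)))@_(val (enum_val b)).

Lemma Tmx_entry c b l : (mdeg (val (enum_val l)) <= mdeg (val (enum_val b)))%N ->
  Tmx c b l = (b == l)%:R.
Proof.
move=> h; rewrite mxE (top_coeff (top_shiftpoly _ _)) //.
by rewrite (inj_eq val_inj) (inj_eq enum_val_inj) eq_sym.
Qed.

Lemma det_Tmx c : \det (Tmx c) = 1.
Proof.
have key : forall s : {perm 'I_N1}, (forall i, Tmx c i (s i) != 0) -> s = 1%g.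
  move=> s hs.
  have hle : forall i : 'I_N1, (mdeg (val (enum_val i)) <= mdeg (val (enum_val (s i))))%N.
    move=> i; case: (leqP (mdeg (val (enum_val i))) (mdeg (val (enum_val (s i))))) => // hlt.
    have := hs i; rewrite Tmx_entry ?(ltnW hlt) //.
    case: (eqVneq i (s i)) => [e|ne]; last by rewrite eqxx.
    by move: hlt; rewrite -e ltnn.
  have hsum : (\sum_(i : 'I_N1) mdeg (val (enum_val i)) = \sum_(i : 'I_N1) mdeg (val (enum_val (s i))))%N.
    exact: (@reindex_inj _ _ _ _ s xpredT (fun i => mdeg (val (enum_val i))) (@perm_inj _ s)).
  have heq := sum_le_eq hle hsum.
  apply/permP => i; rewrite perm1.
  have h1 : (mdeg (val (enum_val (s i))) <= mdeg (val (enum_val i)))%N by rewrite (heq i).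
  have := hs i; rewrite (Tmx_entry _ h1).
  by case: (eqVneq i (s i)) => [e|]; [rewrite -e | rewrite eqxx].
rewrite /determinant (bigD1 1%g) //=.
rewrite [X in _ + X]big1 ?addr0.
  rewrite odd_perm1 expr0 mul1r big1 // => i _; rewrite perm1 Tmx_entry //.
  by rewrite eqxx.
move=> s hs; apply/eqP; rewrite mulf_eq0; apply/orP; right.
apply/negPn/negP => /prodf_neq0 h; case/eqP: hs; apply: key => i; exact: h.
Qed.

Lemma vdm_translate (P : 'I_N1 -> point R n) (c : point R n) :
  \det (vdm_matrix P) = \det (vdm_matrix (fun i k => P i k - c k)).
Proof.
suff -> : vdm_matrix P = vdm_matrix (fun i k => P i k - c k) *m Tmx c.
  by rewrite det_mulmx det_Tmx mulr1.
apply/matrixP => i l; rewrite !mxE.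
set v := (fun k => P i k - c k).
have hd : degle d (shiftpoly (fun k => - c k) (val (enum_val l))).
  apply: degleW (top_degle (top_shiftpoly _ _)).
  by rewrite -ltnS; apply: bmdeg.
have -> : pow_pt (P i) (enum_val l) = dapp (delta d v) (shiftpoly (fun k => - c k) (val (enum_val l))).
  rewrite dapp_delta // meval_shiftpoly /pow_pt /xmon mevalX; apply: eq_bigr => k _.
  by rewrite /v opprK subrK.
rewrite /dapp (big_enum_val (A := predT)) /=.
apply: eq_bigr => b _; rewrite !mxE ffunE mulrC //.
Qed.

End T.


Section L.
Variable R : realType.
Variables n d : nat.
Local Notation N1 := (Npts n d).

Lemma det_bound (M : 'M[R]_N1) (F : 'I_N1 -> 'I_N1 -> R) :
  (forall i j, `|M i j| <= F i j) ->
  `|\det M| <= \sum_(s : {perm 'I_N1}) \prod_i F i (s i).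
Proof.
move=> hF; rewrite /determinant; apply: le_trans (ler_norm_sum _ _ _) _.
apply: ler_sum => s _; rewrite normrM normr_sign mul1r normr_prod.
by apply: ler_prod => i _; rewrite normr_ge0 hF.
Qed.

Definition Ssum := (\sum_(l : 'I_N1) mdeg (val (enum_val l)))%N.

Lemma pow_pt_bound (b : point R n) (j : mindex n d) (r : R) :
  0 <= r -> (forall k, `|b k| <= r) -> `|pow_pt b j| <= r ^+ mdeg (val j).
Proof.
move=> r0 hb; rewrite /pow_pt /xmon mevalX normr_prod mdegE -prodrXr.
by apply: ler_prod => k _; rewrite normr_ge0 normrX lerXn2r ?nnegrE.
Qed.

Lemma det_small (B : 'I_N1 -> point R n) (r : R) (i0 : 'I_N1) :
  0 < r -> r <= 1 ->
  (forall i k, i != i0 -> `|B i k| <= r) -> (forall k, `|B i0 k| <= 1) ->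
  `|\det (vdm_matrix B)| <= #|{perm 'I_N1}|%:R * (r ^+ Ssum / r ^+ d).
Proof.
move=> r0 r1 hB hB0.
pose F (i l : 'I_N1) := r ^+ mdeg (val (enum_val l)) * (if i == i0 then (r ^+ d)^-1 else 1).
apply: le_trans (det_bound (F := F) _) _.
  move=> i l; rewrite mxE /F; case: eqP => [->|/eqP ne].
    apply: le_trans (@pow_pt_bound (B i0) (enum_val l) 1 ler01 hB0) _; rewrite expr1n.
    rewrite ler_pdivlMr ?exprn_gt0 // mul1r (ler_wiXn2l (ltW r0) r1) //.
    by rewrite -ltnS; apply: bmdeg.
  by rewrite mulr1; apply: pow_pt_bound => [|k]; [exact: ltW| exact: hB].
rewrite (eq_bigr (fun _ => r ^+ Ssum / r ^+ d)).
  by rewrite sumr_const mulr_natl.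
move=> s _; rewrite /F big_split /= prodrXr.
rewrite [X in _ * X](bigD1 i0) //= eqxx [X in _ * (_ * X)]big1 ?mulr1; last by move=> i hi; rewrite (negbTE hi).
rewrite /Ssum; congr (r ^+ _ * _).
exact: (esym (@reindex_inj _ _ _ _ s xpredT (fun i => mdeg (val (enum_val i))) (@perm_inj _ s))).
Qed.

Definition repl (A : 'I_N1 -> point R n) (i : 'I_N1) (y : point R n) :=
  fun m => if m == i then y else A m.

Lemma cramer (A : 'I_N1 -> point R n) (y : point R n) (i : 'I_N1) :
  \det (vdm_matrix A) != 0 ->
  ((\row_l pow_pt y (enum_val l)) *m invmx (vdm_matrix A)) 0 i =
  \det (vdm_matrix (repl A i y)) / \det (vdm_matrix A).
Proof.
move=> hdet.
have hu : vdm_matrix A \in unitmx by rewrite unitmxE unitfE.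
rewrite /invmx hu -scalemxAr mxE (expand_det_row (vdm_matrix (repl A i y)) i) mulrC.
congr (_ * _); rewrite mxE; apply: eq_bigr => l _.
rewrite !mxE /repl eqxx; congr (_ * _).
rewrite /cofactor; congr (_ * _); congr (\det _); apply/matrixP => a b; rewrite !mxE.
by rewrite eq_sym (negbTE (neq_lift _ _)).
Qed.

End L.

Local Close Scope ring_scope.

Lemma binsum_id n' d' :
  (\sum_(e < d'.+2) e * 'C(e + n', e) = n'.+1 * 'C(n'.+2 + d', d'))%N.
Proof.
elim: d' => [|d' ih].
  rewrite big_ord_recr big_ord_recr big_ord0 /= bin1 !bin0; lia.
rewrite big_ord_recr /= ih.
have e1 : 'C(n'.+2 + d'.+1, d'.+1) = 'C(n'.+2 + d', d') + 'C(n'.+2 + d', d'.+1).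
  by rewrite addnS binS addnC.
have e2 := mul_bin_left (n'.+2 + d') d'.+1.
have e3 : (d'.+2 + n' = n'.+2 + d')%N by lia.
rewrite e3 e1 mulnDr e2.
have -> : (n'.+2 + d' - d'.+1 = n'.+1)%N by lia.
lia.
Qed.

Lemma card_deg n' d e : (e <= d)%N ->
  #|[pred j : mindex n'.+1 d | mdeg (val j) == e]| = 'C(e + n', e).
Proof.
move=> he; rewrite -size_basis cardE.
rewrite -(size_map val); apply: perm_size; apply: uniq_perm.
- by rewrite (map_inj_uniq val_inj) enum_uniq.
- exact: uniq_basis.
move=> m; rewrite -basis_cover; apply/mapP/idP.
  by case=> j; rewrite mem_enum inE => hj ->.
move=> /eqP hm; have hb : (mdeg m < d.+1)%N by rewrite hm ltnS.
by exists (BMultinom hb); rewrite // mem_enum inE /= hm.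
Qed.

Lemma Ssum_ge n d : (0 < n)%N ->
  (n * Ndim_pred n.+1 d <= \sum_(l : 'I_(Npts n d)) mdeg (val (enum_val l)))%N.
Proof.
case: n => // n' _.
rewrite -(big_enum_val (A := predT) (fun j : mindex n'.+1 d => mdeg (val j))) /=.
have -> : (\sum_(j : mindex n'.+1 d) mdeg (val j) =
    \sum_(e < d.+1) e * #|[pred j : mindex n'.+1 d | mdeg (val j) == e]|)%N.
  transitivity (\sum_(j : mindex n'.+1 d) \sum_(e < d.+1) (mdeg (val j) == e) * e)%N.
    apply: eq_bigr => j _.
    have hj : (mdeg (val j) < d.+1)%N := bmdeg j.
    rewrite (bigD1 (Ordinal hj)) //= eqxx mul1n big1 ?addn0 // => e he.
    by case: eqP => // h; case/eqP: he; apply: val_inj; rewrite /= h.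
  rewrite exchange_big /=; apply: eq_bigr => e _.
  rewrite (eq_bigr (fun j : mindex n'.+1 d => if mdeg (val j) == e then nat_of_ord e else 0%N)).
    by rewrite -big_mkcond sum_nat_const mulnC; congr (_ * _); apply: eq_card => j; rewrite inE.
  by move=> j _; case: eqP => _; rewrite ?mul1n ?mul0n.
have -> : (\sum_(e < d.+1) e * #|[pred j : mindex n'.+1 d | mdeg (val j) == e]| =
    \sum_(e < d.+1) e * 'C(e + n', e))%N.
  by apply: eq_bigr => e _; rewrite card_deg // -ltnS.
case: d => [|d'].
  by rewrite /Ndim_pred muln0.
by rewrite binsum_id /Ndim_pred /Ndim.
Qed.

Local Open Scope ring_scope.


Section M.
Variable R : realType.
Variable n : nat.

Lemma enorm_ge0 (v : point R n) : 0 <= enorm v.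
Proof. exact: sqrtr_ge0. Qed.

Lemma coord_le (v : point R n) k : `|v k| <= enorm v.
Proof.
rewrite /enorm -sqrtr_sqr ler_sqrt ?sqr_ge0 //; last first.
  by rewrite sumr_ge0 // => i _; exact: sqr_ge0.
rewrite (bigD1 k) //= lerDl.
by rewrite sumr_ge0 // => i _; exact: sqr_ge0.
Qed.

Lemma enorm_le_sum (v : point R n) : enorm v <= \sum_k `|v k|.
Proof.
have h : 0 <= \sum_k `|v k| /\ \sum_k v k ^+ 2 <= (\sum_k `|v k|) ^+ 2.
  elim/big_rec2: _ => [|k x y _ [h1 h2]]; first by rewrite expr0n /= lexx.
  split; first by rewrite addr_ge0.
  have hk : v k ^+ 2 = `|v k| ^+ 2 by rewrite real_normK ?num_real.
  rewrite hk; have := normr_ge0 (v k); nra.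
case: h => h1 h2; rewrite /enorm -(ger0_norm h1) -sqrtr_sqr ler_sqrt //.
exact: sqr_ge0.
Qed.

Lemma pdist_coord (u v : point R n) k : `|u k - v k| <= pdist u v.
Proof. exact: (coord_le (fun i => u i - v i)). Qed.

Lemma pdist_ge0 (u v : point R n) : 0 <= pdist u v.
Proof. exact: enorm_ge0. Qed.

Lemma pdist_self (u : point R n) : pdist u u = 0.
Proof.
apply/eqP; rewrite eq_le pdist_ge0 andbT; apply: le_trans (enorm_le_sum _) _.
by rewrite big1 // => i _; rewrite subrr normr0.
Qed.

Lemma pdist_tri (u v w : point R n) : pdist u w <= n%:R * (pdist u v + pdist v w).
Proof.
apply: le_trans (enorm_le_sum _) _.
have -> : n%:R * (pdist u v + pdist v w) = \sum_(k < n) (pdist u v + pdist v w).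
  by rewrite sumr_const card_ord mulr_natl.
apply: ler_sum => k _.
have e : u k - w k = (u k - v k) + (v k - w k) by ring.
rewrite e; apply: le_trans (ler_normD _ _) _.
by apply: lerD; [exact: pdist_coord | exact: pdist_coord].
Qed.

End M.

Section E.
Variable R : realType.
Variables n d : nat.

Lemma E0_sub (X : point R n -> Prop) m (a : point R n) (lam : R) :
  X a -> @Eseq R n d X m a [ffun j => lam * delta d a j].
Proof.
move=> Xa; elim: m lam => [|m ih] lam; first by split => //; exists lam.
split => //; exists 1%N, (fun _ => [ffun j => 1 * delta d a j]), (fun _ => lam).
split; last by apply/ffunP => j; rewrite !ffunE big_ord1 mul1r.
move=> _; split => //.
move=> eps eps0; exists (fun _ => a), [ffun j => 1 * delta d a j]; split; last first.
  by split => [i|j]; rewrite ?pdist_self // subrr normr0.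
exists (fun i => [ffun j => (if i == idx0 n d then 1 else 0) * delta d a j]).
split => //.
- apply/ffunP => j; rewrite sum_ffunE ffunE (bigD1 (idx0 n d)) //=.
  rewrite !ffunE [X in _ = _ + X]big1 ?addr0 // => i hi; rewrite ffunE (negbTE hi) mul0r //.
move=> al i; rewrite dapp_scale dapp_delta_xminus pdist_self.
have h1 : `|(if i == idx0 n d then 1 else 0) * (if mdeg (val al) == 0%N then 1 else 0) : R| <= 1.
  by case: (_ == _); case: (_ == _); rewrite ?mulr1 ?mulr0 ?normr1 ?normr0 ?ler01.
have h2 : (0 : R) ^+ (d - mdeg (val al)) <= 1.
  by case: (d - _)%N => [|e]; rewrite ?expr0 // expr0n ler01.
apply: le_trans (_ : 1 * 1 <= 1); last by rewrite mulr1.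
by apply: ler_pM => //; rewrite ?normr_ge0 ?exprn_ge0.
Qed.

End E.


Section Main.
Variable R : realType.
Variables n d : nat.
Local Notation N1 := (Npts n d).

Lemma key_step (X : point R n -> Prop) m (xi y : point R n) (r : nat -> R)
  (A : nat -> 'I_N1 -> point R n) (c : R) :
  (0 < n)%N ->
  (forall k, 0 < r k) ->
  (forall k i, pdist (A k i) (A k (idx0 n d)) <= r k) ->
  (forall eps : R, 0 < eps -> exists K : nat, forall k : nat, (K <= k)%N ->
      pdist (A k (idx0 n d)) xi < eps) ->
  (forall eps : R, 0 < eps -> exists K : nat, forall k : nat, (K <= k)%N ->
      `|r k| < eps) ->
  0 < c -> (forall k, c * r k ^+ (n * Ndim_pred n.+1 d) <= `|\det (vdm_matrix (A k))|) ->
  (forall k i, X (A k i)) ->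
  (forall l, `|y l - xi l| <= 2^-1) ->
  in_closure_diag X (@Eseq R n d X m) xi
    [ffun j => (c / #|{perm 'I_N1}|%:R) * delta d y j].
Proof.
move=> hn hr hball ha0 hrlim c0 hdet hXA hy eps eps0.
set K0 : R := #|{perm 'I_N1}|%:R.
have K00 : 0 < K0 by rewrite ltr0n; apply/card_gt0P; exists 1%g.
set t := c / K0.
have t0 : 0 < t by rewrite divr_gt0.
have n0 : 0 < n%:R :> R by rewrite ltr0n.
set e1 := Num.min (2^-1) (eps / (2 * n%:R)).
have e10 : 0 < e1 by rewrite lt_min invr_gt0 ltr0n /= divr_gt0 // mulr_gt0.
have e1a : e1 <= 2^-1 by rewrite ge_min lexx.
have e1b : e1 <= eps / (2 * n%:R) by rewrite ge_min lexx orbT.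
have [K1 hK1] := ha0 e1 e10.
have [K2 hK2] := hrlim e1 e10.
set k := maxn K1 K2.
have hk1 := hK1 k (leq_maxl _ _).
have hk2 := hK2 k (leq_maxr _ _).
set a := A k; set a0 := a (idx0 n d); set rk := r k.
have rk0 : 0 < rk := hr k.
have rk1 : rk <= 1.
  have : rk < e1 by rewrite -(gtr0_norm rk0).
  move: e1a; rewrite /rk; lra.
have hV : \det (vdm_matrix a) != 0.
  rewrite -normr_gt0; apply: lt_le_trans (hdet k).
  by rewrite mulr_gt0 // exprn_gt0.
set V := vdm_matrix a.
set row_y := \row_(l < N1) pow_pt y (enum_val l).
set lam := t *: (row_y *m invmx V).
have hu : V \in unitmx by rewrite unitmxE unitfE.
exists a, [ffun j => t * delta d y j]; split; last split.
- exists (fun i => [ffun j => lam 0 i * delta d (a i) j]); split.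
  + by move=> i; apply: hXA.
  + by move=> i; apply: E0_sub; apply: hXA.
  + apply/ffunP => j; rewrite sum_ffunE ffunE.
    have e : lam *m V = t *: row_y by rewrite -scalemxAl mulmxKV.
    have := congr1 (fun M : 'rV_N1 => M 0 (enum_rank j)) e.
    rewrite /= !mxE enum_rankK /delta ffunE => <-; apply: eq_bigr => i _.
    by rewrite !ffunE !mxE enum_rankK.
  + move=> al i; rewrite dapp_scale dapp_delta_xminus.
    case: eqP => [hal|_]; last by rewrite mulr0 normr0 mulr0 ler01.
    rewrite mulr1 hal subn0.
    have hlam : lam 0 i = t * (\det (vdm_matrix (repl a i y)) / \det V).
      by rewrite /lam mxE cramer.
    rewrite hlam (vdm_translate _ a0).
    set B := (fun (q : 'I_N1) (l : 'I_n) => repl a i y q l - a0 l).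
    have hB1 : forall q l, q != i -> `|B q l| <= rk.
      move=> q l hm; rewrite /B /repl (negbTE hm).
      by apply: le_trans (pdist_coord _ _ _) (hball k q).
    have hB2 : forall l, `|B i l| <= 1.
      move=> l; rewrite /B /repl eqxx.
      have -> : y l - a0 l = (y l - xi l) + (xi l - a0 l) by ring.
      apply: le_trans (ler_normD _ _) _.
      have : `|xi l - a0 l| <= pdist a0 xi by rewrite distrC pdist_coord.
      have := hy l; lra.
    have hnum := det_small rk0 rk1 hB1 hB2.
    have hSD : (n * Ndim_pred n.+1 d <= Ssum n d)%N := Ssum_ge d hn.
    have hden : c * rk ^+ Ssum n d <= `|\det V|.
      apply: le_trans (hdet k); rewrite ler_pM2l //.
      by have := ler_wiXn2l (ltW rk0) rk1 hSD.
    have hP : pdist (a i) a0 ^+ d <= rk ^+ d.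
      by rewrite lerXn2r ?nnegrE ?pdist_ge0 ?(ltW rk0) //; apply: hball.
    set s := rk ^+ Ssum n d in hnum hden.
    set u := rk ^+ d in hnum hP.
    have s0 : 0 < s by rewrite exprn_gt0.
    have u0 : 0 < u by rewrite exprn_gt0.
    set Nn := `|\det (vdm_matrix B)| in hnum.
    set Dd := `|\det V| in hden.
    have D0 : 0 < Dd by apply: lt_le_trans hden; rewrite mulr_gt0.
    rewrite normrM (gtr0_norm t0) normrM normfV -/Nn -/Dd.
    have P0 : 0 <= pdist (a i) a0 ^+ d by rewrite exprn_ge0 ?pdist_ge0.
    set P := pdist (a i) a0 ^+ d in P0 hP *.
    have N0 : 0 <= Nn by apply: normr_ge0.
    have f1 : P * Nn <= u * (K0 * (s / u)) by apply: ler_pM.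
    have f2 : u * (K0 * (s / u)) = K0 * s by field; rewrite gt_eqF.
    have f3 : t * K0 = c by rewrite /t; field; rewrite gt_eqF.
    rewrite mulrA mulrCA mulrA ler_pdivrMr // mul1r.
    apply: le_trans hden; rewrite f2 in f1; rewrite -f3; nra.
- move=> i; apply: le_lt_trans (pdist_tri _ a0 _) _.
  have h1 : pdist (a i) a0 <= rk := hball k i.
  have h2 : rk < eps / (2 * n%:R).
    by apply: lt_le_trans e1b; rewrite -(gtr0_norm rk0).
  have h3 : pdist a0 xi < eps / (2 * n%:R) by apply: lt_le_trans e1b.
  have -> : eps = n%:R * (eps / (2 * n%:R) + eps / (2 * n%:R)).
    by field; rewrite pnatr_eq0 -lt0n.
  rewrite ltr_pM2l //; apply: le_lt_trans (lerD h1 (lexx _)) _.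
  by apply: ltrD.
- by move=> j; rewrite subrr normr0.
Qed.

End Main.

Theorem theorem4p1 (R : realType) (n d : nat) (hn : (0 < n)%N)
  (r : nat -> R) (A : nat -> 'I_(Npts n d) -> point R n) (xi : point R n)
  (X : point R n -> Prop) :
  (forall k, 0 < r k) ->
  (forall k, injective (A k)) ->
  (forall k i, pdist (A k i) (A k (idx0 n d)) <= r k) ->
  (forall eps : R, 0 < eps -> exists K : nat, forall k : nat, (K <= k)%N ->
      pdist (A k (idx0 n d)) xi < eps) ->
  (forall eps : R, 0 < eps -> exists K : nat, forall k : nat, (K <= k)%N ->
      `|r k| < eps) ->
  (exists c : R, 0 < c /\ forall k,
      c * r k ^+ (n * Ndim_pred n.+1 d) <= `|\det (vdm_matrix (A k))|) ->
  closed_set X ->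
  (forall k i, X (A k i)) ->
  forall zeta : dual R n d, @paratangent R n d X xi zeta.
Proof.
move=> hr hinj hball ha0 hrlim [c [c0 hdet]] hX hXA zeta.
have Xxi : X xi.
  apply: hX => eps eps0; have [K hK] := ha0 eps eps0.
  by exists (A K (idx0 n d)); split; [exact: hXA | exact: hK K (leqnn K)].
have q0 : 0 < 4^-1 :> R by rewrite invr_gt0 ltr0n.
have [K1 hK1] := ha0 _ q0.
have [K2 hK2] := hrlim _ q0.
set K := maxn K1 K2.
have hk1 := hK1 K (leq_maxl _ _).
have hk2 := hK2 K (leq_maxr _ _).
have hy : forall i l, `|A K i l - xi l| <= 2^-1.
  move=> i l.
  have -> : A K i l - xi l = (A K i l - A K (idx0 n d) l) + (A K (idx0 n d) l - xi l) by ring.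
  apply: le_trans (ler_normD _ _) _.
  have h1 := le_trans (pdist_coord _ _ l) (hball K i).
  have h2 := pdist_coord (A K (idx0 n d)) xi l.
  have h3 : r K < 4^-1 by rewrite -(gtr0_norm (hr K)).
  lra.
set K0 : R := #|{perm 'I_(Npts n d)}|%:R.
have K00 : 0 < K0 by rewrite ltr0n; apply/card_gt0P; exists 1%g.
set t := c / K0.
have t0 : 0 < t by rewrite divr_gt0.
set V := vdm_matrix (A K).
have hV : \det V != 0.
  rewrite -normr_gt0; apply: lt_le_trans (hdet K).
  by rewrite mulr_gt0 // exprn_gt0.
have hu : V \in unitmx by rewrite unitmxE unitfE.
rewrite /paratangent.
have -> : (2 * Npts n d = (2 * Npts n d).-1.+1)%N.
  by rewrite prednK // muln_gt0 Npts_gt0.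
split => //.
set w := (\row_(l < Npts n d) zeta (enum_val l)) *m invmx V.
exists (Npts n d), (fun i => [ffun j => t * delta d (A K i) j]), (fun i => w 0 i / t).
split.
  move=> i; split => //; apply: key_step => //.
apply/ffunP => j; rewrite ffunE.
have e : w *m V = \row_(l < Npts n d) zeta (enum_val l) by rewrite mulmxKV.
have := congr1 (fun M : 'rV_(Npts n d) => M 0 (enum_rank j)) e.
rewrite /= !mxE enum_rankK => <-.
rewrite (eq_bigr (fun i => w 0 i / t * [ffun j0 => t * delta d (A K i) j0] j)) //.
move=> i _; rewrite !ffunE !mxE enum_rankK /delta ?ffunE; field; exact: lt0r_neq0.
Qed.
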